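(* There is an absolute constant $c$ such that for all positive integers $N,\ell,k$ with $k\le N$, $\chi(\mathcal U_{N,\ell,k})\le 2^{c k\log_2(\ell+1)}\cdot\log^{(\lfloor (k-1)/\ell\rfloor-1)}N$, where $\log^{(i)}N$ is interpreted as $N$ for $i\le 0$.
   Context: $[N]=\{1,\dots,N\}$, $S_N$ is the set of permutations of $[N]$. For $\pi,\sigma\in S_N$, $\delta(\pi,\sigma)=\max_{i\in[N]}|\pi^{-1}(i)-\sigma^{-1}(i)|$. For $1\le k\le N$, $S_{N,k}$ is the set of injective maps $[k]\to[N]$; a permutation $\pi'\in S_N$ extends $\pi\in S_{N,k}$ if $\pi'(i)=\pi(i)$ for all $i\in[k]$. For $\pi,\sigma\in S_{N,k}$, $\delta(\pi,\sigma)=\min\{\delta(\pi',\sigma'):\pi',\sigma'\in S_N$ extending $\pi,\sigma$ respectively$\}$. The $k$-restricted uncertainty graph $\mathcal U_{N,\ell,k}$ has vertex set $S_{N,k}$, with $\pi\sim\sigma$ iff $\pi(1)\ne\sigma(1)$ and $\delta(\pi,\sigma)\le\ell$. $\log^{(i)}$ denotes the $i$-fold iterated base-2 logarithm. $\chi$ denotes chromatic number. *)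

(* Defs.v *)
From mathcomp Require Import all_boot.
From mathcomp Require Import fingroup perm.
From Stdlib Require Import Reals.

Set Implicit Arguments.
Unset Strict Implicit.
Unset Printing Implicit Defensive.

Local Open Scope nat_scope.

(* [N] is modelled by 'I_N = {0,...,N-1} (shift by one; distances unaffected). *)

Definition natdist (a b : nat) : nat := maxn (a - b) (b - a).

Definition delta_perm (N : nat) (p s : {perm 'I_N}) : nat :=
  \max_(i : 'I_N) natdist (val ((p^-1)%g i)) (val ((s^-1)%g i)).

Definition SNk (N k : nat) : finType :=
  {f : {ffun 'I_k -> 'I_N} | injectiveb f}.

Definition extends (N k : nat) (p' : {perm 'I_N}) (f : SNk N k) : bool :=
  [forall j : 'I_N, forall i : 'I_k, (val j == val i) ==> (p' j == val f i)].

(* delta on S_{N,k}: minimum of delta over pairs of extensions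
   (extensions always exist; N is an upper bound for every delta_perm, used as
   the neutral element of the min). *)
Definition delta_restr (N k : nat) (f g : SNk N k) : nat :=
  \big[minn/N]_(pq : {perm 'I_N} * {perm 'I_N} | extends pq.1 f && extends pq.2 g)
     delta_perm pq.1 pq.2.

(* adjacency of the k-restricted uncertainty graph U_{N,l,k}:
   pi(1) <> sigma(1) and delta(pi,sigma) <= l  (index 1 is 'I_k's 0) *)
Definition U_adj (N l k : nat) (f g : SNk N k) : bool :=
  [exists i : 'I_k, (val i == 0) && (val f i != val g i)]
  && (delta_restr f g <= l).

Definition colorable (V : finType) (e : rel V) (m : nat) : bool :=
  [exists c : {ffun V -> 'I_m}, [forall x, forall y, e x y ==> (c x != c y)]].

(* chromatic number: least m admitting a proper m-colouring (#|V| always works) *)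
Definition chi (V : finType) (e : rel V) : nat :=
  \big[minn/#|V|]_(m < #|V|.+1 | colorable e m) m.

Local Open Scope R_scope.

Definition log2 (x : R) : R := ln x / ln 2.

(* iterated base-2 logarithm; log^{(0)} x = x.  Each step is clamped below
   by 1 so that the iterate is always defined and >= 1. *)
Fixpoint iterlog (i : nat) (x : R) : R :=
  match i with
  | O => x
  | S i' => Rmax 1 (log2 (iterlog i' x))
  end.

(* Main.v *)
Require Import Defs.
From mathcomp Require Import all_boot.
From mathcomp Require Import fingroup perm.
From mathcomp Require Import zify.
Set Implicit Arguments. Unset Strict Implicit. Unset Printing Implicit Defensive.
Local Open Scope nat_scope.

Definition primepi (Q : nat) := size (filter prime (iota 0 Q.+1)).

Lemma bin_mid_ge n : 2 ^ n <= 'C(n.*2, n).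
Proof.
elim: n => [|n IH] //.
have H := mul_bin_diag (n.*2.+2) n.
have E : 'C(n.+1.*2, n.+1) = 2 * 'C(n.*2.+1, n).
  have : n.+1 * 'C(n.+1.*2, n.+1) = n.+1 * (2 * 'C(n.*2.+1, n)).
    rewrite doubleS -H /= mulnA; congr (_ * _); lia.
  by move/eqP; rewrite eqn_mul2l /= => /eqP.
rewrite E expnS leq_mul2l /=; apply: leq_trans IH _; exact: leq_bin2l.
Qed.

Lemma sum_ind_le (t M : nat) : \sum_(1 <= k < M) (k <= t) <= minn M.-1 t.
Proof.
elim: M => [|M IH]; first by rewrite big_geq.
case: M IH => [|M] IH; first by rewrite big_geq.
rewrite big_nat_recr //=; case: (leqP M.+1 t) => h /=; lia.
Qed.

Lemma logn_fact_ext p n m : prime p -> n <= m ->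
  logn p n`! = \sum_(1 <= k < m.+1) n %/ p ^ k.
Proof.
move=> pp le; rewrite logn_fact //.
rewrite [RHS](@big_cat_nat _ _ _ n.+1) //= ?ltnS //.
rewrite [X in _ + X]big1_seq ?addn0 // => k /andP[_]; rewrite mem_index_iota => /andP[hk _].
apply: divn_small; apply: leq_trans hk _.
apply: ltnW; apply: ltn_expl; exact: prime_gt1.
Qed.

Lemma logn_bin_le p n : prime p -> 0 < n -> p ^ logn p 'C(n.*2, n) <= n.*2.
Proof.
move=> pp n0.
have p1 := prime_gt1 pp.
have hb := bin_fact (leq_addr n n : n <= n + n).
rewrite -addnn addnK in hb *.
set t := trunc_log p (n + n).
have Cpos : 0 < 'C(n + n, n) by rewrite bin_gt0 leq_addr.
have fp m : 0 < m`! by exact: fact_gt0.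
have e1 : logn p (n + n)`! = logn p 'C(n + n, n) + (logn p n`! + logn p n`!).
  by rewrite -hb lognM ?muln_gt0 ?fp // lognM.
rewrite (@logn_fact_ext p (n + n) (n + n)) // in e1.
rewrite (@logn_fact_ext p n (n + n)) ?leq_addr // in e1.
have key : \sum_(1 <= k < (n + n).+1) (n + n) %/ p ^ k <=
   \sum_(1 <= k < (n + n).+1) (n %/ p ^ k + n %/ p ^ k + (k <= t)).
  apply: leq_sum => k _.
  have pk : 0 < p ^ k by rewrite expn_gt0 ltnW.
  case: (leqP k t) => hk.
    rewrite addn1 -ltnS ltn_divLR //.
    have h1 := ltn_pmod n pk.
    rewrite {1 2}(divn_eq n (p ^ k)); nia.
  rewrite addn0 divn_small; first by [].
  have := @trunc_log_ltn p (n + n) p1; rewrite -/t => h.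
  apply: leq_trans h _; rewrite leq_exp2l //.
rewrite !big_split /= in key.
have key2 := sum_ind_le t (n + n).+1.
have : logn p 'C(n + n, n) <= t by lia.
rewrite -(leq_exp2l _ _ p1) => h; apply: leq_trans h _.
rewrite /t; apply: trunc_logP => //; lia.
Qed.

Lemma prod_const_seq (T : Type) (r : seq T) c : \prod_(i <- r) c = c ^ size r.
Proof. elim: r => [|a r IH]; by rewrite ?big_nil ?big_cons ?IH ?expnS. Qed.

Lemma bin_le_pow n : 0 < n -> 'C(n.*2, n) <= (n.*2) ^ primepi (n.*2).
Proof.
move=> n0.
have Cpos : 0 < 'C(n.*2, n) by rewrite bin_gt0 -addnn leq_addr.
rewrite {1}(prod_prime_decomp Cpos) prime_decompE big_map /=.
apply: (@leq_trans (\prod_(p <- primes 'C(n.*2, n)) n.*2)).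
  rewrite big_seq_cond [X in _ <= X]big_seq_cond; apply: leq_prod => p /andP[hp _].
  have pp : prime p by move: hp; rewrite mem_primes => /andP[].
  exact: logn_bin_le.
rewrite prod_const_seq; apply: leq_pexp2l; first by rewrite double_gt0.
apply: uniq_leq_size; first exact: primes_uniq.
move=> p hp; have pp : prime p by move: hp; rewrite mem_primes => /andP[].
rewrite mem_filter pp mem_iota add0n ltnS /=.
have h := logn_bin_le pp n0.
apply: leq_trans h; rewrite -{1}(expn1 p) leq_exp2l ?prime_gt1 // logn_gt0 //.
Qed.

Lemma cheb s : 2 ^ s <= s.+1 * primepi (2 ^ s.+1).
Proof.
have n0 : 0 < 2 ^ s by rewrite expn_gt0.
have h1 := bin_mid_ge (2 ^ s).
have h2 := bin_le_pow n0.
have e : (2 ^ s).*2 = 2 ^ s.+1 by rewrite -muln2 expnSr.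
rewrite e in h1 h2.
have h3 := leq_trans h1 h2.
by rewrite -expnM leq_exp2l in h3.
Qed.

Definition Qof (A : nat) := 2 ^ ((trunc_log 2 A).+1.*2 + 5).

Lemma Qof_pi A : A < primepi (Qof A).
Proof.
set u := (trunc_log 2 A).+1.
have hu : A < 2 ^ u by apply: trunc_log_ltn.
have := cheb (u.*2 + 4).
rewrite /Qof -/u => h; rewrite -addnS in h.
rewrite ltnNge; apply/negP => hle.
have h' : 2 ^ (u.*2 + 4) <= (u.*2 + 5) * A.
  by apply: leq_trans h _; apply: leq_mul.
have ev : 2 ^ (u.*2 + 4) = 16 * (2 ^ u * 2 ^ u) by rewrite expnD -addnn expnD mulnC.
rewrite ev in h'.
have hv : u < 2 ^ u by apply: ltn_expl.
nia.
Qed.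

Lemma two_pow_primes z : 0 < z -> 2 ^ size (primes z) <= z.
Proof.
move=> z0; rewrite {2}(prod_prime_decomp z0) prime_decompE big_map /=.
rewrite -prod_const_seq big_seq [X in _ <= X]big_seq; apply: leq_prod => p hp.
have pp : prime p by move: hp; rewrite mem_primes => /andP[].
have := hp; rewrite -logn_gt0 => lg.
apply: leq_trans (prime_gt1 pp) _; rewrite -{1}(expn1 p) leq_exp2l ?prime_gt1 //.
Qed.

Definition gooda (x : nat) (Y : seq nat) (p : nat) :=
  prime p && all (fun y => (y == x) || (x %% p != y %% p)) Y.

Lemma size_flatten_le (T U : Type) (F : T -> seq U) (Y : seq T) b :
  (forall y, size (F y) <= b) -> size (flatten (map F Y)) <= size Y * b.
Proof.
move=> h; elim: Y => [|y Y IH] //=; rewrite size_cat mulSn; exact: leq_add.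
Qed.

Definition ndist (x y : nat) := x - y + (y - x).

Lemma exists_good lam D x Y : x < 2 ^ lam -> all (fun y => y < 2 ^ lam) Y ->
  size Y <= D -> has (gooda x Y) (iota 0 (Qof (D * lam)).+1).
Proof.
move=> hx hY hD; apply/negPn/negP => /hasPn nh.
set Q := Qof (D * lam).
have sub : {subset filter prime (iota 0 Q.+1) <=
    flatten (map (fun y => primes (ndist x y)) Y)}.
  move=> p; rewrite mem_filter => /andP[pp hp].
  have := nh p hp; rewrite /gooda pp /= => /allPn[y yY].
  rewrite negb_or negbK => /andP[yx /eqP m].
  apply/flattenP; exists (primes (ndist x y)); first by apply/mapP; exists y.
  rewrite mem_primes pp /=.
  have d0 : 0 < ndist x y by move: yx; rewrite /ndist; case: ltngtP => //; lia.
  rewrite d0 /=.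
  have [le|le] := leqP y x.
    have : x == y %[mod p] by apply/eqP.
    rewrite eqn_mod_dvd // /ndist.
    have -> : y - x = 0 by lia.
    by rewrite addn0.
  have : y == x %[mod p] by apply/eqP.
  rewrite eqn_mod_dvd ?(ltnW le) // /ndist.
  have -> : x - y = 0 by lia.
  by rewrite add0n.
have h1 := uniq_leq_size (filter_uniq _ (iota_uniq 0 Q.+1)) sub.
have h2 : size (flatten (map (fun y => primes (ndist x y)) Y)) <= size Y * lam.
  have : forall y, y \in Y -> size (primes (ndist x y)) <= lam.
    move=> y yY; have yl := allP hY y yY.
    case: (posnP (ndist x y)) => [->|d0] //.
    rewrite -(leq_exp2l _ _ (isT : 1 < 2)).
    apply: leq_trans (two_pow_primes d0) _; rewrite /ndist; apply: ltnW; lia.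
  elim: Y {hY hD nh sub h1} => [|y Y IH] hs //=.
  rewrite size_cat mulSn leq_add ?hs ?mem_head //.
  by apply: IH => z zY; apply: hs; rewrite in_cons zY orbT.
have h3 := Qof_pi (D * lam).
rewrite -/Q /primepi in h3.
have : size Y * lam <= D * lam by rewrite leq_mul2r hD orbT.
move=> h4; have := leq_ltn_trans (leq_trans (leq_trans h1 h2) h4) h3; by rewrite ltnn.
Qed.

Definition red (D lam x : nat) (Y : seq nat) :=
  let Q := Qof (D * lam) in
  let p := find (gooda x Y) (iota 0 Q.+1) in
  p * Q.+2 + x %% p.

Definition lamnext (D lam : nat) := ((trunc_log 2 (D * lam)).+1.*2 + 6).*2.

Lemma find_pos x Y n : 0 < find (gooda x Y) (iota 0 n.+1).
Proof. by []. Qed.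

Lemma find_le x Y n : find (gooda x Y) (iota 0 n.+1) <= n.+1.
Proof. by have := find_size (gooda x Y) (iota 0 n.+1); rewrite size_iota. Qed.

Lemma Qof_ge A : 2 <= Qof A.
Proof. rewrite /Qof; apply: leq_trans (leq_pexp2l _ (leq_addl _ 5)) => //. Qed.

Lemma red_lt D lam x Y : red D lam x Y < 2 ^ lamnext D lam.
Proof.
rewrite /red /lamnext.
set Q := Qof (D * lam).
have eQ : 2 ^ ((trunc_log 2 (D * lam)).+1.*2 + 6) = Q.*2.
  by rewrite /Q /Qof addnS expnS mul2n.
rewrite -muln2 mulnC expnM eQ.
have q2 := Qof_ge (D * lam); rewrite -/Q in q2.
have hp := find_pos x Y Q; have hq := find_le x Y Q.
set p := find _ _ in hp hq *.
have := ltn_pmod x hp.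
nia.
Qed.

Lemma red_ok D lam x y Y Y' : x < 2 ^ lam -> all (fun z => z < 2 ^ lam) Y ->
  size Y <= D -> y \in Y -> y != x -> red D lam x Y != red D lam y Y'.
Proof.
move=> hx hY hD yY yx; apply/negP => /eqP e.
have hg := exists_good hx hY hD.
move: e; rewrite /red.
set Q := Qof (D * lam).
have hp := find_pos x Y Q; have hq := find_le x Y Q.
have hp' := find_pos y Y' Q; have hq' := find_le y Y' Q.
set p := find (gooda x Y) _ in hp hq *.
set p' := find (gooda y Y') _ in hp' hq' *.
have r1 := ltn_pmod x hp; have r2 := ltn_pmod y hp'.
move=> e.
have ep : p = p'.
  have := congr1 (fun z => z %/ Q.+2) e; rewrite /= !divnMDl // !divn_small //; lia.
rewrite -ep in e; have em : x %% p = y %% p by lia.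
have := nth_find 0 hg; rewrite -/p nth_iota; last by move: hg; rewrite has_find size_iota.
rewrite add0n => /andP[_ /allP /(_ y yY)].
by rewrite (negbTE yx) em eqxx.
Qed.

Definition seqf N k (f : SNk N k) (i : nat) : nat :=
  odflt 0 (omap (fun j : 'I_k => val (val f j)) (insub i)).

Lemma seqf_ord N k (f : SNk N k) (j : 'I_k) : seqf f j = val (val f j).
Proof. by rewrite /seqf valK. Qed.

Lemma adj_first N l k (f g : SNk N k) : U_adj l f g -> seqf f 0 != seqf g 0.
Proof.
case/andP => /existsP[i /andP[/eqP i0 ne]] _.
have -> : 0 = val i by [].
by rewrite !seqf_ord.
Qed.

Lemma bigmin_witness (I : finType) (P : pred I) (F : I -> nat) (b l : nat) :
  l < b -> \big[minn/b]_(i | P i) F i <= l -> exists i, P i && (F i <= l).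
Proof.
move=> lb h; case: (boolP [exists i, P i && (F i <= l)]) => [/existsP //|/existsPn H].
exfalso; move: h; rewrite leqNgt => /negP; apply.
elim/big_ind: _ => //.
  by move=> x y hx hy; rewrite leq_min hx hy.
by move=> i Pi; have := H i; rewrite Pi /= -ltnNge.
Qed.

Lemma adj_window N l k (f g : SNk N k) : U_adj l f g -> l < N ->
  forall i, i + l < k -> exists j, [/\ j <= i + l, i <= j + l & seqf g i = seqf f j].
Proof.
case/andP => _ hd lN i hi.
have [[p s] /andP[/andP[ep es] hds]] := bigmin_witness lN hd.
simpl in ep, es, hds.
have kN : k <= N.
  have := leq_card (val f) (injectiveP _ (valP f)); by rewrite !card_ord.
have ik : i < k by lia.
have iN : i < N by lia.
pose ik' := Ordinal ik; pose iN' := Ordinal iN.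
pose v := s iN'.
have sv : s iN' = val g ik'.
  by move/forallP: es => /(_ iN') /forallP /(_ ik') /implyP /(_ (eqxx _)) /eqP.
pose j := (p^-1)%g v.
have hdj : natdist (val ((p^-1)%g v)) (val ((s^-1)%g v)) <= l.
  apply: leq_trans hds; rewrite /delta_perm.
  exact: (@leq_bigmax _ (fun i0 => natdist (val ((p^-1)%g i0)) (val ((s^-1)%g i0))) v).
have sinv : (s^-1)%g v = iN' by rewrite /v permK.
rewrite sinv /natdist /= in hdj.
have jk : j < k by rewrite /j; lia.
exists (nat_of_ord j); split; [rewrite /j; lia | rewrite /j; lia |].
have pj : p j = v by rewrite /j permKV.
have pf : p j = val f (Ordinal jk).
  by move/forallP: ep => /(_ j) /forallP /(_ (Ordinal jk)) /implyP /(_ (eqxx _)) /eqP.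
have -> : i = val ik' by [].
have -> : nat_of_ord j = val (Ordinal jk) by [].
by rewrite !seqf_ord -sv -pf pj.
Qed.

Definition cand (l n : nat) (h : nat -> nat) (o : {ffun 'I_n.+1 -> 'I_(l.*2).+1}) : nat -> nat :=
  fun i => if i <= n then h (i + o (inord i) - l) else 0.

Definition Dl (l k : nat) := (l.*2.+1) ^ k.

Fixpoint lamt (N l k t : nat) : nat :=
  match t with 0 => (trunc_log 2 N).+1 | t'.+1 => lamnext (Dl l k) (lamt N l k t') end.

Fixpoint Ct (N l k t : nat) (h : nat -> nat) : nat :=
  match t with
  | 0 => h 0 %% N
  | t'.+1 => red (Dl l k) (lamt N l k t') (Ct N l k t' h)
       [seq Ct N l k t' (@cand l (t' * l) h o) | o <- enum {ffun 'I_(t' * l).+1 -> 'I_(l.*2).+1}]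
  end.

Lemma Ct_lt N l k t h : 0 < N -> Ct N l k t h < 2 ^ lamt N l k t.
Proof.
move=> N0; case: t => [|t] /=; last exact: red_lt.
apply: leq_trans (ltn_pmod _ N0) _; apply: ltnW; exact: trunc_log_ltn.
Qed.

Lemma Ct_local N l k t h1 h2 : (forall i, i <= t * l -> h1 i = h2 i) ->
  Ct N l k t h1 = Ct N l k t h2.
Proof.
elim: t h1 h2 => [|t IH] h1 h2 H /=; first by rewrite H.
rewrite (IH h1 h2); last by move=> i hi; apply: H; rewrite mulSn; lia.
congr red; apply: eq_map => o; apply: IH => i hi.
rewrite /cand hi; apply: H.
have := ltn_ord (o (inord i)); rewrite mulSn; lia.
Qed.

Lemma size_Y (l t : nat) (F : {ffun 'I_(t * l).+1 -> 'I_(l.*2).+1} -> nat) k :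
  t * l < k -> size [seq F o | o <- enum {ffun 'I_(t * l).+1 -> 'I_(l.*2).+1}] <= Dl l k.
Proof.
move=> h; rewrite size_map -cardE card_ffun !card_ord /Dl.
apply: leq_pexp2l => //.
Qed.

Lemma Ct_proper N l k t (f g : SNk N k) : 0 < N -> k <= N -> t * l < k ->
  U_adj l f g -> Ct N l k t (seqf f) != Ct N l k t (seqf g).
Proof.
move=> N0 kN; elim: t => [|t IH] htl adj /=.
  have sl : forall (h : SNk N k) i, seqf h i < N.
    by move=> h i; rewrite /seqf; case: insub => [j|] //=.
  by rewrite !modn_small ?sl // (adj_first adj).
have ht : t * l < k by move: htl; rewrite mulSn; lia.
have lN : l < N by move: htl; rewrite mulSn; lia.
have ne := IH ht adj.
set Y := [seq _ | o <- _].
set x := Ct N l k t (seqf f).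
set y := Ct N l k t (seqf g).
apply: red_ok.
- exact: Ct_lt.
- by apply/allP => z /mapP[o _ ->]; apply: Ct_lt.
- apply: size_Y; exact: ht.
-
  pose P (i : 'I_(t * l).+1) (j : 'I_k) :=
    [&& (j <= i + l), (i <= j + l) & (seqf g i == seqf f j)].
  pose o : {ffun 'I_(t * l).+1 -> 'I_(l.*2).+1} := [ffun i =>
     if [pick j | P i j] is Some j then inord (j + l - i) else ord0].
  apply/mapP; exists o; first by rewrite mem_enum.
  rewrite /y; apply: Ct_local => i hi.
  have il : i + l < k by move: htl; rewrite mulSn; lia.
  have [j [j1 j2 j3]] := adj_window adj lN il.
  have jk : j < k by lia.
  rewrite /cand hi /o ffunE.
  have ii : nat_of_ord (inord i : 'I_(t * l).+1) = i by rewrite inordK // ltnS.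
  case: pickP => [j' /and3P[h1 h2 /eqP h3]|nP].
    rewrite ii in h1 h2 h3.
    have e : nat_of_ord (inord (j' + l - i) : 'I_(l.*2).+1) = j' + l - i.
      by rewrite inordK //; lia.
    rewrite ii e (_ : i + (j' + l - i) - l = j') ?h3 //; lia.
  exfalso; have := nP (Ordinal jk); rewrite /P ii /= j1 j2 j3 eqxx //.
- by rewrite eq_sym.
Qed.

Lemma bigmin_le (I : eqType) (r : seq I) (P : pred I) (F : I -> nat) b j :
  j \in r -> P j -> \big[minn/b]_(i <- r | P i) F i <= F j.
Proof.
elim: r => [|a r IH] //; rewrite in_cons big_cons => /orP[/eqP <-|jr] Pj.
  by rewrite Pj geq_minl.
case: (P a); last exact: IH.
by rewrite geq_min IH ?orbT.
Qed.

Lemma chi_le (V : finType) (e : rel V) m : colorable e m -> chi e <= m.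
Proof.
move=> cm; rewrite /chi.
case: (leqP m #|V|) => hm.
  have mo : m < #|V|.+1 by rewrite ltnS.
  exact: (@bigmin_le _ _ _ (fun i : 'I_#|V|.+1 => nat_of_ord i) _ (Ordinal mo) (mem_index_enum _)).
apply: leq_trans (ltnW hm); elim/big_ind: _ => //.
by move=> x y hx _; rewrite geq_min hx.
by move=> i _; rewrite -ltnS.
Qed.

Lemma colorable_of (V : finType) (e : rel V) (c : V -> nat) m :
  (forall v, c v < m) -> (forall x y, e x y -> c x != c y) -> colorable e m.
Proof.
move=> hc hp; apply/existsP; exists [ffun v => Ordinal (hc v)].
apply/forallP => x; apply/forallP => y; apply/implyP => exy.
by rewrite !ffunE; apply: hp.
Qed.

Lemma chi_bound N l k : 0 < N -> 0 < k -> k <= N ->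
  chi (@U_adj N l k) <= 2 ^ lamt N l k ((k - 1) %/ l).
Proof.
move=> N0 k0 kN; apply: chi_le.
apply: (@colorable_of _ _ (fun f => Ct N l k ((k - 1) %/ l) (seqf f))).
  by move=> v; apply: Ct_lt.
move=> x y; apply: Ct_proper => //.
have := leq_trunc_div (k - 1) l; lia.
Qed.

Fixpoint Lit (N t : nat) : nat :=
  match t with 0 => N | t'.+1 => maxn 1 (trunc_log 2 (Lit N t')) end.

Lemma tl_mul x y : trunc_log 2 (x * y) <= trunc_log 2 x + trunc_log 2 y + 1.
Proof.
case: (posnP (x * y)) => [->|p]; first by rewrite trunc_log0.
rewrite -ltnS -(@ltn_exp2l 2) //.
apply: leq_ltn_trans (trunc_logP _ p) _ => //.
have hx := @trunc_log_ltn 2 x isT; have hy := @trunc_log_ltn 2 y isT.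
rewrite (_ : (trunc_log 2 x + trunc_log 2 y + 1).+1 = (trunc_log 2 x).+1 + (trunc_log 2 y).+1); last lia.
rewrite expnD; exact: ltn_mul.
Qed.

Lemma s8 s : 8 * s <= 2 ^ s + 64.
Proof.
elim: s => [|s IH] //.
case: (leqP s 2) => h.
  by case: s h IH => [|[|[|]]].
have : 8 <= 2 ^ s by rewrite (_ : 8 = 2 ^ 3) // leq_exp2l.
rewrite expnS; lia.
Qed.

Lemma tl8 y : 8 * trunc_log 2 y <= y + 64.
Proof.
case: (posnP y) => [->|p]; first by rewrite trunc_log0.
apply: leq_trans (s8 _) _; rewrite leq_add2r; exact: trunc_logP.
Qed.

Lemma s4 s : s ^ 4 <= 32 * 2 ^ s.
Proof.
case: (leqP s 8) => h.
  by case: s h => [|[|[|[|[|[|[|[|[|]]]]]]]]].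
elim: s h => [|s IH] h //.
case: (leqP s 8) => h'.
  have -> : s = 8 by lia.
  by [].
have IH' := IH h'.
have e : 2 ^ s.+1 = 2 * 2 ^ s by rewrite expnS.
have p4 : forall m, m ^ 4 = m * m * m * m.
  by move=> m; rewrite !expnS expn0 muln1 !mulnA.
have : s.+1 ^ 4 <= 2 * s ^ 4.
  rewrite !p4; nia.
rewrite e; lia.
Qed.

Lemma Lit_pos N t : 0 < N -> 0 < Lit N t.
Proof. by move=> N0; case: t => [|t] //=; rewrite leq_max. Qed.

Lemma pow_L N j : 0 < N -> 2 ^ Lit N j.+1 <= 2 * Lit N j.
Proof.
move=> N0; have hp := Lit_pos j N0; rewrite /= /maxn.
case: ltnP => h.
  apply: leq_trans (trunc_logP _ hp) _ => //; lia.
by rewrite (_ : 2 ^ 1 = 2) //; lia.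
Qed.

Definition acst l k := 8 * trunc_log 2 (Dl l k) + 124.

Lemma lam_inv N l k t : 0 < N -> lamt N l k t <= acst l k + 4 * Lit N t.+1.
Proof.
move=> N0; elim: t => [|t IH] /=.
  rewrite /acst; have := leq_maxr 1 (trunc_log 2 N); lia.
rewrite /lamnext.
set D := Dl l k; set lam := lamt N l k t in IH *.
set L1 := Lit N t.+1 in IH *.
have L1p : 0 < L1 by apply: Lit_pos.
have h1 := tl_mul D lam.
have h2 : trunc_log 2 lam <= trunc_log 2 (acst l k + 4) + trunc_log 2 L1 + 1.
  apply: leq_trans (tl_mul _ _); apply: leq_trunc_log.
  apply: leq_trans IH _; nia.
have h3 := tl8 (acst l k + 4).
have h4 : trunc_log 2 L1 <= maxn 1 (trunc_log 2 L1) := leq_maxr _ _.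
rewrite /acst -/D in h2 h3 *.
set u := trunc_log 2 (8 * trunc_log 2 D + 124 + 4) in h2 h3.
change (maxn 1 (trunc_log 2 (Lit N t))) with L1; lia.
Qed.

Lemma K_bound l k : 0 < l -> 0 < k -> 2 ^ acst l k * 1024 <= (l.+1) ^ (150 * k).
Proof.
move=> l0 k0; rewrite /acst.
set D := Dl l k.
set t := trunc_log 2 D.
have D0 : 0 < D by rewrite /D /Dl expn_gt0.
have hD : 2 ^ t <= D by apply: trunc_logP.
rewrite (_ : 1024 = 2 ^ 10) // -expnD (_ : 8 * t + 124 + 10 = t * 8 + 134); last lia.
rewrite expnD expnM (_ : 150 * k = (2 * k) * 8 + 134 * k); last lia.
rewrite expnD; apply: leq_mul.
  rewrite expnM leq_exp2r //; apply: leq_trans hD _.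
  rewrite /D /Dl expnM leq_exp2r //.
  rewrite expnS expn1; nia.
apply: leq_trans (_ : (l.+1) ^ 134 <= _).
  rewrite leq_exp2r //.
rewrite leq_pexp2l //; lia.
Qed.

Lemma final_nat N l k : 0 < N -> 0 < l -> 0 < k -> k <= N ->
  chi (@U_adj N l k) <= (l.+1) ^ (150 * k) * Lit N ((k - 1) %/ l - 1).
Proof.
move=> N0 l0 k0 kN.
apply: leq_trans (chi_bound l N0 k0 kN) _.
have K2 : 2 <= (l.+1) ^ (150 * k).
  apply: leq_trans (_ : l.+1 <= _); first by rewrite ltnS.
  by rewrite -{1}(expn1 l.+1) leq_pexp2l //; lia.
case e: ((k - 1) %/ l) => [|m] /=.
  rewrite (_ : 2 ^ (trunc_log 2 N).+1 = 2 * 2 ^ trunc_log 2 N); last by rewrite expnS.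
  have := trunc_logP (isT : 1 < 2) N0; nia.
rewrite subn1 /=.
have hi := lam_inv l k m.+1 N0.
apply: leq_trans (_ : 2 ^ (acst l k + 4 * Lit N m.+2) <= _).
  by rewrite leq_exp2l.
rewrite expnD (mulnC 4) expnM.
have h1 := pow_L m.+1 N0.
have h2 := pow_L m N0.
have h3 := s4 (Lit N m.+1).
have h4 : (2 ^ Lit N m.+2) ^ 4 <= (2 * Lit N m.+1) ^ 4 by rewrite leq_exp2r.
have h5 : (2 * Lit N m.+1) ^ 4 = 16 * (Lit N m.+1) ^ 4 by rewrite expnMn.
have hK := K_bound l0 k0.
set X := 2 ^ acst l k in hK *.
set Y := (2 ^ Lit N m.+2) ^ 4 in h4 *.
set Z := Lit N m.+1 ^ 4 in h3 h5.
set W := 2 ^ Lit N m.+1 in h1 h3.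
set KK := l.+1 ^ (150 * k) in hK K2 *.
have : Y <= 1024 * Lit N m by lia.
move=> hY; apply: leq_trans (_ : X * (1024 * Lit N m) <= _).
  by rewrite leq_mul2l hY orbT.
rewrite mulnA; apply: leq_mul => //; lia.
Qed.

From Stdlib Require Import Reals Lra.

Lemma ln2_pos : (0 < ln 2)%R.
Proof. have := ln_lt_2; lra. Qed.

Lemma ln_le' x y : (0 < x)%R -> (x <= y)%R -> (ln x <= ln y)%R.
Proof.
move=> x0 [h|->]; last by apply: Rle_refl.
by apply: Rlt_le; apply: ln_increasing.
Qed.

Lemma leR_of (m n : nat) : (m <= n)%N -> (INR m <= INR n)%R.
Proof. by move/leP; apply: le_INR. Qed.

Lemma INR_expn a b : INR (expn a b) = (INR a ^ b)%R.
Proof.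
elim: b => [|b IH]; first by rewrite expn0.
by rewrite expnS -multE mult_INR IH.
Qed.

Lemma INR_muln a b : INR (muln a b) = (INR a * INR b)%R.
Proof. by rewrite -multE mult_INR. Qed.

Lemma tl_log2 (L : nat) : (0 < L)%N -> (INR (trunc_log 2 L) <= log2 (INR L))%R.
Proof.
move=> L0; set s := trunc_log 2 L.
have h : (expn 2 s <= L)%N := @trunc_logP 2 L isT L0.
have h1 := leR_of h.
rewrite INR_expn in h1.
have h2 : (ln (INR 2 ^ s) <= ln (INR L))%R.
  apply: ln_le' => //; apply: pow_lt; simpl; lra.
rewrite ln_pow in h2; last by simpl; lra.
have e : INR 2 = 2%R by simpl; lra.
rewrite e in h2; rewrite /log2.
have l2 := ln2_pos.
apply: (Rmult_le_reg_r (ln 2)) => //.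
rewrite /Rdiv Rmult_assoc Rinv_l; last lra.
lra.
Qed.

Lemma Lit_le N t : (0 < N)%N -> (INR (Lit N t) <= iterlog t (INR N))%R.
Proof.
move=> N0; elim: t => [|t IH] /=; first by apply: Rle_refl.
have Lp := Lit_pos t N0.
rewrite /maxn; case: ltnP => h.
  apply: Rle_trans (Rmax_r _ _).
  apply: Rle_trans (tl_log2 Lp) _.
  rewrite /log2; apply: Rmult_le_compat_r.
    by apply: Rlt_le; apply: Rinv_0_lt_compat; apply: ln2_pos.
  apply: ln_le' => //.
  have := leR_of Lp; simpl; lra.
by apply: Rle_trans (Rmax_l _ _); simpl; lra.
Qed.

Theorem lemma1p5 :
  exists c : R,
    forall N l k : nat, (0 < N)%nat -> (0 < l)%nat -> (0 < k)%nat -> (k <= N)%nat ->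
      (INR (chi (@U_adj N l k))
        <= Rpower 2 (c * INR k * log2 (INR l + 1))
           * iterlog ((k - 1) %/ l - 1)%nat (INR N))%R.
Proof.
exists 150%R => N l k N0 l0 k0 kN.
have h := leR_of (final_nat N0 l0 k0 kN).
rewrite INR_muln INR_expn S_INR in h.
apply: Rle_trans h _.
have eK : (Rpower 2 (150 * INR k * log2 (INR l + 1)) = (INR l + 1) ^ (150 * k))%R.
  have lp : (0 < INR l + 1)%R by have := pos_INR l; lra.
  rewrite -Rpower_pow //.
  rewrite /Rpower /log2; f_equal.
  rewrite INR_muln (_ : INR 150 = 150%R); last by rewrite INR_IZR_INZ.
  have := ln2_pos; move=> l2; field; lra.
rewrite eK.
apply: Rmult_le_compat_l.
  apply: pow_le; have := pos_INR l; lra.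
exact: Lit_le N0.
Qed.
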